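(* In the setting described in the context, let $\epsilon\in\{\pm1\}$ be the sign of $a(\tilde\alpha_0h')$ and $l=|a(\tilde\alpha_0h')|/t$. Then for every $0\le j\le r$ there is an integer $m_j\in\mathbb Z$ such that $\epsilon l\alpha_j=\tilde\alpha_jh'+m_jh'$.
   Context: Let $\mathbb K$ be a number field of degree $d=r+2\ge2$ with exactly one pair of complex conjugate embeddings; order its embeddings $\sigma_1,\dots,\sigma_r$ (real), $\sigma_{\mathbb C}$, $\overline{\sigma_{\mathbb C}}$. A $\mathbb Q$-basis $(e_0,\dots,e_{r+1})$ of $\mathbb K$ is positive if $i\cdot\det(\sigma_j(e_{k-1}))_{1\le j,k\le d}>0$. Let $\mathfrak f\ne\mathcal O_{\mathbb K}$ be an integral ideal, $q\mathbb Z=\mathfrak f\cap\mathbb Z$, $\mathfrak b$ an integral ideal coprime to $\mathfrak f$, $L=\mathfrak f\mathfrak b^{-1}$, $\mathfrak a$ an integral ideal coprime to $\mathfrak f\mathfrak b$ with $\mathfrak a^{-1}L/L$ cyclic, $N=\mathcal N(\mathfrak a)$. An element $h\in L$ is admissible if $h/q-1\in L$ and $h/N$ generates $\mathfrak a^{-1}L/L$. Let $\mathcal O^{+,\times}_{\mathfrak f}$ be the group of units $\equiv1\bmod\mathfrak f$ positive at all real embeddings. Let $u_1,\dots,u_r\in\mathcal O^{+,\times}_{\mathfrak f}$ with $1,u_1,\dots,u_r$ linearly independent over $\mathbb Q$, $u_0=1$. For $h$: $h\in L$ admissible, $h=mh'$, $m\in\mathbb Z_{>0}$, $h'$ primitive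 in $L$. Fix a positive $\mathbb Z$-basis $(e_0=h',e_1,\dots,e_{r+1})$ of $L$ with $u_jh'=\sum_{k=0}^jc_{jk0}e_k$, $c_{jk0}\in\mathbb Z$, $c_{jj0}>0$; $\lambda=\prod_jc_{jj0}$; $a:L\to\mathbb Z$ with $\lambda a=\det(h',u_1h',\dots,u_rh',\cdot)$ in this basis; $au_j:y\mapsto a(u_jy)$; $\mathcal A=(au_j(e_k))_{0\le j\le r,1\le k\le r+1}$, elementary divisors $1=A_0\mid\dots\mid A_r$, $t=A_r$; $\alpha_j=\sum_{i=1}^{r+1}b_{ij}e_i$ with $(b_{ij})=t\mathcal A^{-1}$, so $au_k(\alpha_j)=t\delta_{jk}$. For $1$: fix a positive $\mathbb Z$-basis $(1,\tilde e_1,\dots,\tilde e_{r+1})$ of $\mathcal O_{\mathbb K}$ with $u_j=\sum_{k=0}^j\tilde c_{jk0}\tilde e_k$ ($\tilde e_0=1$), $\tilde c_{jj0}>0$; $\tilde\lambda=\prod_j\tilde c_{jj0}$; $\tilde a$ with $\tilde\lambda\tilde a=\det(1,u_1,\dots,u_r,\cdot)$; $\tilde{\mathcal A}=(\tilde au_j(\tilde e_k))$, elementary divisors $1=\tilde A_0\mid\dots\mid\tilde A_r$, $\tilde t=\tilde A_r$; $\tilde\alpha_j=\sum_{i=1}^{r+1}\tilde b_{ij}\tilde e_i$ with $(\tilde b_{ij})=\tilde t\tilde{\mathcal A}^{-1}$. *)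

(* Defs.v *)
From HB Require Import structures.
From mathcomp Require Import all_boot all_order all_algebra all_field.
From mathcomp Require Import algC.
Set Implicit Arguments. Unset Strict Implicit. Unset Printing Implicit Defensive.
Import Order.TTheory GRing.Theory Num.Theory.
Local Open Scope ring_scope.

Section NF.
Variable K : fieldExtType rat.

Definition kset := K -> Prop.

Definition OK : kset := fun x =>
  exists p : {poly int}, p \is monic /\ root (map_poly (fun z : int => z%:~R : K) p) x.

Definition frac_ideal (I : kset) : Prop :=
  [/\ exists x, I x /\ x != 0, I 0,
      (forall x y, I x -> I y -> I (x - y)),
      (forall a x, OK a -> I x -> I (a * x)) &
      exists d, d != 0 /\ forall x, I x -> OK (d * x)].

Definition int_ideal (I : kset) : Prop := frac_ideal I /\ forall x, I x -> OK x.

Definition iprod (I J : kset) : kset := fun x =>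
  exists s : seq (K * K), (forall p, p \in s -> I p.1 /\ J p.2) /\
    x = \sum_(p <- s) p.1 * p.2.

Definition ideal_inv (I : kset) : kset := fun x => forall y, I y -> OK (x * y).

Definition icoprime (I J : kset) : Prop :=
  forall x, OK x -> exists y z, [/\ I y, J z & x = y + z].

(* N = #(O_K / I): absolute norm of the integral ideal I *)
Definition ideal_norm (I : kset) (N : nat) : Prop :=
  exists s : seq K, [/\ size s = N, (forall x, x \in s -> OK x),
    uniq s, (forall x y, x \in s -> y \in s -> I (x - y) -> x = y) &
    (forall x, OK x -> exists2 y, y \in s & I (x - y))].

Definition generates_quot (M L : kset) (g : K) : Prop :=
  M g /\ forall x, M x -> exists n : int, L (x - n%:~R * g).

Definition primitive_in (L : kset) (x : K) : Prop :=
  L x /\ forall (n : int) y, L y -> x = n%:~R * y -> n = 1 \/ n = -1.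

Definition Zbasis n (L : kset) (e : 'I_n -> K) : Prop :=
  [/\ forall i, L (e i),
      (forall x, L x -> exists c : 'I_n -> int, x = \sum_i (c i)%:~R * e i) &
      (forall c : 'I_n -> int, \sum_i (c i)%:~R * e i = 0 -> forall i, c i = 0)].

Definition pos_basis n (sigma : 'I_n -> {rmorphism K -> algC}) (e : 'I_n -> K) :=
  0 < 'i * \det (\matrix_(j, k) sigma j (e k)).

Definition coords n (e : 'I_n -> K) (i : 'I_n) (y : K) : rat :=
  coord [tuple e k | k < n] i y.

Definition det_in r (e : 'I_r.+2 -> K) (w : 'I_r.+1 -> K) (y : K) : rat :=
  \det (\matrix_(i, k) coords e i
          (if (k < r.+1)%N then w (inord k) else y)).

Definition uvec r (u : 'I_r -> K) (j : 'I_r.+1) : K :=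
  match unlift ord0 j with Some j' => u j' | None => 1 end.

(* u lies in O^{+,x}_f: unit of O_K, = 1 mod f, positive at the real embeddings
   sigma_0, ..., sigma_{r-1} *)
Definition unit_pos_mod r (sigma : 'I_r.+2 -> {rmorphism K -> algC}) (f : kset) (u : K) :=
  [/\ u != 0, OK u, OK u^-1, f (u - 1) &
      forall i : 'I_r.+2, (i < r)%N -> 0 < sigma i u].

Definition Amat r (aa : K -> int) (u : 'I_r -> K) (e : 'I_r.+2 -> K) : 'M[int]_r.+1 :=
  \matrix_(j, k) aa (uvec u j * e (lift ord0 k)).

Definition alpha_vec r (e : 'I_r.+2 -> K) (A : 'M[int]_r.+1) (t : int) (j : 'I_r.+1) : K :=
  \sum_(i < r.+1)
     ((t%:~R *: invmx (map_mx (fun z : int => z%:~R : rat) A)) i j) *: e (lift ord0 i).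

End NF.

Definition last_elem_div n (M : 'M[int]_n.+1) (t : int) : Prop :=
  exists (P Q : 'M[int]_n.+1) (d : 'I_n.+1 -> int),
    [/\ P \in unitmx, Q \in unitmx, (forall i, 0 <= d i),
        (forall i : 'I_n, (d (widen_ord (leqnSn n) i) %| d (lift ord0 i))%Z) &
        M = P *m diag_mx (\row_i d i) *m Q] /\ t = d ord_max.

(* Main.v *)
Require Import Defs.
From HB Require Import structures.
From mathcomp Require Import all_boot all_order all_algebra all_field.
From mathcomp Require Import algC algnum zify ring.
Import Order.TTheory GRing.Theory Num.Theory.
Local Open Scope ring_scope.
Set Implicit Arguments. Unset Strict Implicit.

Lemma nth_mktup (V : nmodType) n (w : 'I_n -> V) (i : 'I_n) :
  [tuple w j | j < n]`_i = w i.
Proof. by rewrite -tnth_nth tnth_mktuple. Qed.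

Section LA.
Variable K : fieldExtType rat.
Variable r : nat.
Hypothesis hdim : \dim {:K} = r.+2.
Variable b : 'I_r.+2 -> K.
Hypothesis bfree : free [tuple b k | k < r.+2].

Lemma span_b : <<[tuple b k | k < r.+2]>>%VS = fullv.
Proof.
apply/eqP; rewrite eqEdim subvf /=.
by move: bfree; rewrite /free => /eqP->; rewrite size_tuple hdim.
Qed.

Lemma coordsK y : y = \sum_i coords b i y *: b i.
Proof.
have := @coord_span _ _ _ [tuple b k | k < r.+2] y; rewrite span_b memvf => /(_ isT) {1}->.
by apply: eq_bigr => i _; rewrite nth_mktup.
Qed.

Lemma coordsP (a : rat) x y i : coords b i (a *: x + y) = a * coords b i x + coords b i y.
Proof. by rewrite /coords linearP. Qed.

Lemma coords_sum (c : 'I_r.+2 -> rat) j : coords b j (\sum_i c i *: b i) = c j.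
Proof.
rewrite /coords -(coord_sum_free c j bfree); congr coord; apply: eq_bigr => i _.
by rewrite nth_mktup.
Qed.

Lemma coords_eq0 y : (forall i, coords b i y = 0) -> y = 0.
Proof. by move=> h; rewrite (coordsK y) big1 // => i _; rewrite h scale0r. Qed.

Lemma coords_b i j : coords b j (b i) = (i == j)%:R.
Proof. by rewrite /coords -(@nth_mktup _ _ b i) coord_free. Qed.

Section Det.
Variable w : 'I_r.+1 -> K.

Definition Mw (y : K) : 'M[rat]_r.+2 :=
  \matrix_(i, k) coords b i (if (k < r.+1)%N then w (inord k) else y).

Lemma det_inE y : det_in b w y = \det (Mw y).
Proof. by []. Qed.

Definition gam i := cofactor (Mw 0) i ord_max.

Lemma det_in_exp y : det_in b w y = \sum_i coords b i y * gam i.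
Proof.
rewrite det_inE (expand_det_col _ ord_max); apply: eq_bigr => i _.
rewrite /gam mxE ltnn; congr (_ * _).
rewrite /cofactor; congr (_ * _); congr (\det _); apply/matrixP => p q.
rewrite !mxE.
have -> : (lift ord_max q < r.+1)%N by have := ltn_ord q; rewrite /= /bump; lia.
by [].
Qed.

Lemma det_inP a x y : det_in b w (a *: x + y) = a * det_in b w x + det_in b w y.
Proof.
rewrite !det_in_exp mulr_sumr -big_split /=; apply: eq_bigr => i _.
by rewrite coordsP mulrDl -mulrA.
Qed.

Lemma det_in0 : det_in b w 0 = 0.
Proof. by rewrite det_in_exp big1 // => i _; rewrite /coords linear0 mul0r. Qed.

Lemma det_inD x y : det_in b w (x + y) = det_in b w x + det_in b w y.
Proof. by rewrite -[x]scale1r det_inP mul1r scale1r. Qed.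

Lemma det_inZ a x : det_in b w (a *: x) = a * det_in b w x.
Proof. by rewrite -[a *: x]addr0 det_inP det_in0 addr0. Qed.

Lemma det_inN x : det_in b w (- x) = - det_in b w x.
Proof. by rewrite -scaleN1r det_inZ mulN1r. Qed.

Lemma det_in_sum I (s : seq I) (P : pred I) (c : I -> rat) (v : I -> K) :
  det_in b w (\sum_(i <- s | P i) c i *: v i) = \sum_(i <- s | P i) c i * det_in b w (v i).
Proof.
elim/big_rec2: _ => [|i y1 y2 _ <-]; first exact: det_in0.
by rewrite det_inD det_inZ.
Qed.

Lemma coords_lsum n (c : 'I_n -> rat) (v : 'I_n -> K) i :
  coords b i (\sum_k c k *: v k) = \sum_k c k * coords b i (v k).
Proof. by rewrite /coords linear_sum; apply: eq_bigr => k _; rewrite linearZ. Qed.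

Lemma mem_tup n (v : 'I_n -> K) k : v k \in <<[tuple v j | j < n]>>%VS.
Proof. by apply: memv_span; rewrite -(@nth_mktup _ _ v k) mem_nth // size_tuple. Qed.

Lemma ord_split (k : 'I_r.+2) :
  (exists k' : 'I_r.+1, k = widen_ord (leqnSn _) k') \/ k = ord_max.
Proof.
have [hk|hk] := ltnP k r.+1.
  by left; exists (Ordinal hk); apply: val_inj.
by right; apply: val_inj => /=; have := ltn_ord k; lia.
Qed.

Hypothesis wfree : free [tuple w j | j < r.+1].

Lemma det_in_eq0 y : det_in b w y = 0 <-> y \in <<[tuple w j | j < r.+1]>>%VS.
Proof.
rewrite det_inE -det_tr; split.
- move/eqP/det0P => [x xn0 hx].
  have hz : \sum_k x 0 k *: (if (k < r.+1)%N then w (inord k) else y) = 0.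
    apply: coords_eq0 => i; rewrite coords_lsum.
    have h0 : (x *m (Mw y)^T) 0 i = 0 by rewrite hx mxE.
    rewrite -[RHS]h0 mxE; apply: eq_bigr => k _; by rewrite !mxE.
  move: hz; rewrite big_ord_recr /= ltnn.
  have [x0|xn] := eqVneq (x 0 ord_max) 0.
    rewrite x0 scale0r addr0 => hs; exfalso; move/eqP: xn0; apply.
    have hw : forall k : 'I_r.+1, x 0 (widen_ord (leqnSn _) k) = 0.
      move=> k; move/freeP: wfree => /(_ (fun k => x 0 (widen_ord (leqnSn _) k))).
      apply => //.
      rewrite -[RHS]hs; apply: eq_bigr => k0 _; rewrite nth_mktup /= ltn_ord.
      by rewrite inord_val.
    apply/rowP => k; rewrite mxE.
    by case: (ord_split k) => [[k' ->]|->] //; rewrite ?hw.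
  move=> hs; have -> : y = - (x 0 ord_max)^-1 *:
      \sum_(k < r.+1) x 0 (widen_ord (leqnSn _) k) *:
        (if (widen_ord (leqnSn r.+1) k < r.+1)%N then w (inord (widen_ord (leqnSn r.+1) k)) else y).
    apply: (@scalerI _ _ (x 0 ord_max)) => //.
    rewrite scalerA mulrN mulfV // scaleN1r; apply/eqP; rewrite -addr_eq0 addrC; apply/eqP; exact: hs.
  apply: rpredZ; apply: rpred_sum => k _; apply: rpredZ; rewrite /= ltn_ord.
  exact: mem_tup.
- move=> hy; apply/eqP/det0P.
  pose x : 'rV[rat]_r.+2 := \row_k (if (k < r.+1)%N
       then coord [tuple w j | j < r.+1] (inord k) y else -1).
  exists x.
    apply/eqP => /rowP/(_ ord_max); rewrite !mxE ltnn => /eqP.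
    by rewrite oppr_eq0 oner_eq0.
  apply/rowP => i; rewrite !mxE.
  under eq_bigr do rewrite !mxE.
  rewrite big_ord_recr /= ltnn.
  have hyE := coord_span hy.
  have -> : coords b i y = \sum_(k < r.+1) coord [tuple w j | j < r.+1] k y * coords b i (w k).
    by rewrite {1}hyE coords_lsum; apply: eq_bigr => k _; rewrite nth_mktup.
  rewrite mulN1r; apply/eqP; rewrite subr_eq0; apply/eqP.
  apply: eq_bigr => k _; rewrite ltn_ord.
  by have -> : inord (widen_ord (leqnSn r.+1) k) = k by apply: val_inj; rewrite /= inordK.
Qed.

End Det.

Lemma exists_notin n (v : 'I_n -> K) : (n < r.+2)%N ->
  exists y, y \notin <<[tuple v j | j < n]>>%VS.
Proof.
move=> hn.
have [/forallP h | /forallPn [i hi]] := boolP [forall i, b i \in <<[tuple v j | j < n]>>%VS];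
  last by exists (b i).
exfalso.
have : (fullv <= <<[tuple v j | j < n]>>)%VS.
  rewrite -span_b; apply/span_subvP => z /mapP [i _ ->]; exact: h.
move/dimvS; rewrite hdim => h1.
have := leq_trans h1 (dim_span _); rewrite size_tuple; lia.
Qed.

End LA.

Lemma proportional (K : lmodType rat) (phi psi : K -> rat)
  (hphi : forall a x y, phi (a *: x + y) = a * phi x + phi y)
  (hpsi : forall a x y, psi (a *: x + y) = a * psi x + psi y)
  (hker : forall y, psi y = 0 -> phi y = 0) (y0 : K) (hy0 : psi y0 != 0) :
  forall y, phi y = (phi y0 / psi y0) * psi y.
Proof.
move=> y; set c := psi y / psi y0.
have hz : psi ((- c) *: y0 + y) = 0.
  by rewrite hpsi /c mulNr -mulrA mulVf // mulr1 addNr.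
have := hker _ hz; rewrite hphi => /eqP; rewrite mulNr addrC subr_eq0.
rewrite /c => /eqP ->.
by rewrite [LHS]mulrC [LHS]mulrA [LHS]mulrAC.
Qed.
Section OKsec.
Variable K : fieldExtType rat.
Variable s0 : {rmorphism K -> algC}.

Lemma OK_Aint (x : K) : OK x <-> s0 x \in Aint.
Proof.
split.
- move=> [p [mp rp]].
  apply: (@root_monic_Aint (map_poly (fun z : int => z%:~R : algC) p)).
  + have -> : map_poly (fun z : int => z%:~R : algC) p =
       map_poly s0 (map_poly (fun z : int => z%:~R : K) p).
      rewrite -map_poly_comp; apply: eq_map_poly => z /=; by rewrite rmorph_int.
    by rewrite fmorph_root.
  + rewrite monicE (lead_coef_map_inj (@intr_inj _) (rmorph0 _)) (monicP mp) //.
  + by apply/polyOverP => i; rewrite coef_map /= rpred_int.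
- move=> hA; have /floorpP [pz Dp] := hA.
  exists pz; split.
  + have := minCpoly_monic (s0 x).
    rewrite Dp monicE (lead_coef_map_inj (@intr_inj _) (rmorph0 _)) => /eqP h1.
    by rewrite monicE; apply/eqP; apply: (@intr_inj algCnumField); rewrite h1.
  + rewrite -(fmorph_root s0) -map_poly_comp.
    have := root_minCpoly (s0 x); rewrite Dp.
    by rewrite (eq_map_poly (fun z => rmorph_int s0 z)).
Qed.

Lemma OKM (x y : K) : OK x -> OK y -> OK (x * y).
Proof. by move=> /OK_Aint hx /OK_Aint hy; apply/OK_Aint; rewrite rmorphM rpredM. Qed.

Lemma OK_int (z : int) : OK (z%:~R : K).
Proof. by apply/OK_Aint; rewrite rmorph_int Aint_int. Qed.

Lemma OK1 : OK (1 : K).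
Proof. by have := OK_int 1. Qed.
End OKsec.
Lemma led_facts n (M : 'M[int]_n.+1) t : last_elem_div M t ->
  map_mx (fun z : int => z%:~R : rat) M \in unitmx ->
  0 < t /\ exists X : 'M[int]_n.+1, M *m X = t%:M.
Proof.
move=> [P [Q [d [[hP hQ hd hch hM] ht]]]] hu.
have hdet : \det M != 0.
  rewrite unitmxE det_map_mx unitfE in hu.
  by apply: contraNneq hu => ->; rewrite rmorph0.
have hdn0 : forall i, d i != 0.
  move=> i; move: hdet; rewrite hM !det_mulmx det_diag.
  apply: contraNneq => hi; rewrite (bigD1 i) //= mxE hi mul0r mulr0 mul0r //.
have hdvd : forall m, (d (inord (n - m)) %| d ord_max)%Z.
  elim=> [|m IH]; first by rewrite subn0 (_ : inord n = ord_max) //; apply: val_inj; rewrite /= inordK.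
  have [hm|hm] := leqP n m.
    by move: IH; rewrite (_ : n - m.+1 = n - m)%N //; lia.
  have hlt : (n - m.+1 < n)%N by lia.
  apply: dvdz_trans IH.
  have := hch (Ordinal hlt).
  rewrite (_ : widen_ord _ _ = inord (n - m.+1)); last by apply: val_inj; rewrite /= inordK //; lia.
  rewrite (_ : lift ord0 _ = inord (n - m)) //; apply: val_inj; rewrite /= /bump /= inordK; lia.
have hdvd' : forall i, (d i %| t)%Z.
  move=> i; rewrite ht; have := hdvd (n - i)%N.
  by rewrite (_ : inord _ = i) //; apply: val_inj; rewrite /= inordK; have := ltn_ord i; lia.
split.
  rewrite ht lt_def hdn0 /=; exact: hd.
exists (invmx Q *m diag_mx (\row_i (t %/ d i)%Z) *m invmx P).
have hD : diag_mx (\row_i d i) *m diag_mx (\row_i (t %/ d i)%Z) = t%:M.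
  apply/matrixP => i j; rewrite mul_diag_mx !mxE.
  have [->|hij] := eqVneq i j; last by rewrite !mulr0n mulr0.
  by rewrite !mulr1n mulrC divzK.
rewrite hM -!mulmxA (mulmxA Q) mulmxV // mul1mx (mulmxA (diag_mx _)) hD.
by rewrite mul_scalar_mx -scalemxAr mulmxV // scalemx1.
Qed.

Section Alpha.
Variable K : fieldExtType rat.
Variable r : nat.
Hypothesis hdim : \dim {:K} = r.+2.
Variable u : 'I_r -> K.
Hypothesis hfree : free [tuple uvec u j | j < r.+1].
Variable bb : 'I_r.+2 -> K.
Hypothesis bfree : free [tuple bb k | k < r.+2].
Variable h0 : K.
Hypothesis hb0 : bb ord0 = h0.
Variable w : 'I_r.+1 -> K.
Hypothesis hw : forall j, w j = uvec u j * h0.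
Variable S : K -> Prop.
Variable aaf : K -> int.
Variable Pc : rat.
Hypothesis hPc : Pc != 0.
Hypothesis hS : forall y, S y -> Pc * (aaf y)%:~R = det_in bb w y.
Hypothesis hSu : forall k i, S (uvec u k * bb (lift ord0 i)).

Local Notation F := (det_in bb w).
Local Notation Aq := (map_mx (fun z : int => z%:~R : rat) (Amat aaf u bb)).

Lemma h0n0 : h0 != 0.
Proof. by rewrite -hb0; apply: (free_not0 bfree); apply/mapP; exists ord0; rewrite ?mem_enum ?tnth_mktuple. Qed.

Lemma wfree : free [tuple w j | j < r.+1].
Proof.
apply/freeP => k hk i.
move/freeP: hfree; apply.
apply: (mulIf h0n0); rewrite mul0r -{}[RHS]hk mulr_suml; apply: eq_bigr => j _.
by rewrite !nth_mktup hw scalerAl.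
Qed.

Lemma Fw k : F (w k) = 0.
Proof. by apply/(det_in_eq0 hdim bfree wfree); exact: mem_tup. Qed.

Lemma AqE k i : Aq k i = Pc^-1 * F (uvec u k * bb (lift ord0 i)).
Proof. by rewrite -hS // mulKf // !mxE. Qed.

Lemma F_mul_sum (x : 'I_r.+1 -> rat) y :
  F ((\sum_k x k *: uvec u k) * y) = \sum_k x k * F (uvec u k * y).
Proof.
rewrite mulr_suml -(det_in_sum hdim bfree w); apply: congr1; apply: eq_bigr => k _; by rewrite scalerAl.
Qed.

Lemma Aq_unit : Aq \in unitmx.
Proof.
rewrite unitmxE unitfE; apply/negP => /det0P [x xn0 hx].
pose v := \sum_k x 0 k *: uvec u k.
have hvb : forall i, F (v * bb i) = 0.
  move=> i; case: (unliftP ord0 i) => [i'|] ->.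
    rewrite F_mul_sum.
    have hx0 : (x *m Aq) 0 i' = 0 by rewrite hx mxE.
    apply: (mulfI (invr_neq0 hPc)); rewrite mulr0 -{2}hx0 mxE mulr_sumr.
    by apply: eq_bigr => k _; rewrite AqE mulrCA.
  rewrite hb0 F_mul_sum big1 // => k _; by rewrite -hw Fw mulr0.
have hv : forall y, F (v * y) = 0.
  move=> y; rewrite (coordsK hdim bfree y) mulr_sumr.
  rewrite (_ : \sum_i _ = \sum_i coords bb i y *: (v * bb i)); last first.
    by apply: eq_bigr => i _; rewrite scalerAr.
  by rewrite (det_in_sum hdim bfree w) big1 // => i _; rewrite hvb mulr0.
have v0 : v = 0.
  have [//|vn0] := eqVneq v 0; exfalso.
  have [y0 hy0] := exists_notin hdim bfree w (ltnSn _).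
  have := hv (v^-1 * y0); rewrite mulVKf // => /(det_in_eq0 hdim bfree wfree).
  by apply/negP.
move/eqP: xn0; apply; apply/rowP => k; rewrite mxE.
move/freeP: hfree => /(_ (fun k => x 0 k)); apply.
by rewrite -[RHS]v0; apply: eq_bigr => j _; rewrite nth_mktup.
Qed.

Lemma F_alpha (T : int) k j :
  F (uvec u k * alpha_vec bb (Amat aaf u bb) T j) = Pc * T%:~R * (k == j)%:R.
Proof.
rewrite /alpha_vec mulr_sumr.
rewrite (_ : \sum_i _ = \sum_i (T%:~R *: invmx Aq) i j *: (uvec u k * bb (lift ord0 i))); last first.
  by apply: eq_bigr => i _; rewrite scalerAr.
rewrite (det_in_sum hdim bfree w).
have : (Aq *m (T%:~R *: invmx Aq)) k j = T%:~R * (k == j)%:R.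
  by rewrite -scalemxAr mulmxV ?Aq_unit // !mxE.
rewrite mxE -mulrA => <-; rewrite mulr_sumr; apply: eq_bigr => i _.
by rewrite AqE mulrA mulVKf // mulrC.
Qed.

Lemma F_ker z : (forall k, F (uvec u k * z) = 0) -> z = coords bb ord0 z *: h0.
Proof.
move=> hz.
pose zc : 'cV[rat]_r.+1 := \col_i coords bb (lift ord0 i) z.
have hAz : Aq *m zc = 0.
  apply/colP => k; rewrite [LHS]mxE [RHS]mxE.
  have e1 : uvec u k * z = coords bb ord0 z *: (uvec u k * h0) +
      \sum_(i < r.+1) coords bb (lift ord0 i) z *: (uvec u k * bb (lift ord0 i)).
    rewrite {1}(coordsK hdim bfree z) big_ord_recl mulrDr mulr_sumr hb0 scalerAr.
    by congr (_ + _); apply: eq_bigr => i _; rewrite scalerAr.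
  apply: (mulfI hPc); rewrite mulr0 -[RHS](hz k) e1.
  rewrite (det_inD hdim bfree w) (det_inZ hdim bfree w) -hw Fw mulr0 add0r (det_in_sum hdim bfree w) mulr_sumr.
  by apply: eq_bigr => i _; rewrite AqE !mxE mulrA mulVKf // mulrC.
have zc0 : zc = 0 by rewrite -(mulKmx Aq_unit zc) hAz mulmx0.
rewrite {1}(coordsK hdim bfree z) big_ord_recl hb0 big1 ?addr0 // => i _.
by have := congr1 (fun M : 'cV[rat]_r.+1 => M i 0) zc0; rewrite !mxE => ->; rewrite scale0r.
Qed.

End Alpha.

Lemma Zbasis_free (K : fieldExtType rat) n (L : K -> Prop) (e : 'I_n -> K) :
  Zbasis L e -> free [tuple e k | k < n].
Proof.
move=> [_ _ hind]; apply/freeP => k hk i.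
pose D : int := \prod_j denq (k j).
have hD : D != 0 by apply: lt0r_neq0; apply: prodr_gt0 => j _; exact: denq_gt0.
pose c j : int := numq (k j) * \prod_(l | l != j) denq (k l).
have hc : forall j, ((c j)%:~R : rat) = (D%:~R : rat) * k j.
  move=> j; rewrite /c /D [in RHS](bigD1 j) //= !intrM numqE.
  by rewrite [RHS]mulrC mulrA.
have hs : \sum_j (c j)%:~R * e j = 0.
  transitivity ((D%:~R : rat) *: \sum_j k j *: e j).
    rewrite scaler_sumr; apply: eq_bigr => j _.
    by rewrite scalerA -hc scaler_int mulrzl.
  rewrite (_ : \sum_j k j *: e j = 0) ?scaler0 //.
  by rewrite -[RHS]hk; apply: eq_bigr => j _; rewrite nth_mktup.
have := hc i; rewrite (hind c hs i) => /esym /eqP; rewrite mulf_eq0 intr_eq0 (negbTE hD) /=.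
by move/eqP.
Qed.

Section Iprod.
Variable K : fieldExtType rat.
Variables I J : K -> Prop.

Lemma iprod_OK (hI : forall a x, OK a -> I x -> I (a * x)) a x :
  OK a -> iprod I J x -> iprod I J (a * x).
Proof.
move=> ha [s [hs ->]]; exists [seq (a * p.1, p.2) | p <- s]; split.
  by move=> p /mapP [q hq ->] /=; have [h1 h2] := hs q hq; split => //; exact: hI.
by rewrite big_map mulr_sumr; apply: eq_bigr => p _; rewrite mulrA.
Qed.

Lemma iprod0 : iprod I J 0.
Proof. by exists [::]; split => //; rewrite big_nil. Qed.

Lemma iprodD x y : iprod I J x -> iprod I J y -> iprod I J (x + y).
Proof.
move=> [s [hs ->]] [s' [hs' ->]]; exists (s ++ s'); split; last by rewrite big_cat.
by move=> p; rewrite mem_cat => /orP [/hs|/hs'].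
Qed.
End Iprod.

Unset Implicit Arguments. Set Strict Implicit.

Theorem proposition14
  (K : fieldExtType rat) (r : nat)
  (sigma : 'I_r.+2 -> {rmorphism K -> algC})
  (hdim : \dim {:K} = r.+2)
  (hsig_inj : forall i j, (forall x, sigma i x = sigma j x) -> i = j)
  (hsig_all : forall phi : {rmorphism K -> algC}, exists i, forall x, phi x = sigma i x)
  (hsig_real : forall i : 'I_r.+2, (i < r)%N -> forall x, sigma i x \is Num.real)
  (hsig_cplx : exists x, sigma (inord r) x \isn't Num.real)
  (hsig_conj : forall x, sigma (inord r.+1) x = (sigma (inord r) x)^*)
  (f b a : K -> Prop) (q : int) (N : nat)
  (hf : int_ideal f) (hf_ne : exists x, OK x /\ ~ f x)
  (hq : 0 < q) (hfZ : forall z : int, f z%:~R <-> (q %| z)%Z)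
  (hb : int_ideal b) (hbf : icoprime b f)
  (ha : int_ideal a) (hafb : icoprime a (iprod f b))
  (hcyc : exists g, generates_quot (iprod (ideal_inv a) (iprod f (ideal_inv b)))
                                    (iprod f (ideal_inv b)) g)
  (hN : ideal_norm a N)
  (u : 'I_r -> K)
  (hu : forall j, unit_pos_mod sigma f (u j))
  (hfree : free [tuple uvec u j | j < r.+1])
  (h h' : K) (m : nat)
  (hL : iprod f (ideal_inv b) h)
  (hadm1 : iprod f (ideal_inv b) (h / q%:~R - 1))
  (hadm2 : generates_quot (iprod (ideal_inv a) (iprod f (ideal_inv b)))
                          (iprod f (ideal_inv b)) (h / N%:R))
  (hm : (0 < m)%N) (hhm : h = m%:R * h')
  (hprim : primitive_in (iprod f (ideal_inv b)) h')
  (e : 'I_r.+2 -> K) (he : Zbasis (iprod f (ideal_inv b)) e)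
  (he0 : e ord0 = h') (hepos : pos_basis sigma e)
  (c : 'I_r.+1 -> 'I_r.+2 -> int)
  (hc : forall j, uvec u j * h' = \sum_(k < r.+2 | (k <= j)%N) (c j k)%:~R * e k)
  (hcpos : forall j, 0 < c j (widen_ord (leqnSn _) j))
  (aa : K -> int)
  (haa : forall y, iprod f (ideal_inv b) y ->
     ((\prod_j c j (widen_ord (leqnSn _) j))%:~R * (aa y)%:~R : rat)
       = det_in e (fun j => uvec u j * h') y)
  (t : int) (ht : last_elem_div (Amat aa u e) t)
  (et : 'I_r.+2 -> K) (het : Zbasis (@OK K) et)
  (het0 : et ord0 = 1) (hetpos : pos_basis sigma et)
  (ct : 'I_r.+1 -> 'I_r.+2 -> int)
  (hct : forall j, uvec u j = \sum_(k < r.+2 | (k <= j)%N) (ct j k)%:~R * et k)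
  (hctpos : forall j, 0 < ct j (widen_ord (leqnSn _) j))
  (aat : K -> int)
  (haat : forall y, OK y ->
     ((\prod_j ct j (widen_ord (leqnSn _) j))%:~R * (aat y)%:~R : rat)
       = det_in et (uvec u) y)
  (tt : int) (htt : last_elem_div (Amat aat u et) tt) :
  let alpha := alpha_vec e (Amat aa u e) t in
  let alphat := alpha_vec et (Amat aat u et) tt in
  let eps : int := sgz (aa (alphat ord0 * h')) in
  let l : rat := (`|aa (alphat ord0 * h')|)%:~R / t%:~R in
  forall j : 'I_r.+1, exists mj : int,
    (eps%:~R * l) *: alpha j = alphat j * h' + mj%:~R * h'.
Proof.
move=> alpha alphat eps l j.
pose L := iprod f (ideal_inv b).
pose s0 := sigma ord0.
have hfm : forall a1 x, OK a1 -> f x -> f (a1 * x) by case: hf => [[_ _ _ hfm0 _] _].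
have LOK : forall a1 x, OK a1 -> L x -> L (a1 * x) by move=> a1 x; exact: iprod_OK.
have LD : forall x y, L x -> L y -> L (x + y) by move=> x y; exact: iprodD.
have Lsum : forall n (g : 'I_n -> K), (forall i, L (g i)) -> L (\sum_i g i).
  move=> n g hg; apply: (big_ind L); [exact: iprod0 | exact: LD | by move=> i _].
have LZ : forall (z : int) x, L x -> L ((z%:~R : rat) *: x).
  by move=> z x hx; rewrite scaler_int -mulrzl; apply: LOK => //; exact: OK_int.
have hL' : L h' by case: hprim.
have efree := Zbasis_free he.
have etfree := Zbasis_free het.
have OKu : forall k, OK (uvec u k).
  move=> k; rewrite /uvec; case: (unliftP ord0 k) => [k'|] _.
    by case: (hu k').
  exact: (OK1 s0).
have hPe : ((\prod_j c j (widen_ord (leqnSn _) j))%:~R : rat) != 0.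
  by rewrite intr_eq0; apply: lt0r_neq0; apply: prodr_gt0 => k _; exact: hcpos.
have hPt : ((\prod_j ct j (widen_ord (leqnSn _) j))%:~R : rat) != 0.
  by rewrite intr_eq0; apply: lt0r_neq0; apply: prodr_gt0 => k _; exact: hctpos.
have hSue : forall k i, L (uvec u k * e (lift ord0 i)).
  by move=> k i; apply: LOK (OKu k) _; case: he => he1 _ _; exact: he1.
have hSut : forall k i, OK (uvec u k * et (lift ord0 i)).
  by move=> k i; apply: (OKM s0) (OKu k) _; case: het => he1 _ _; exact: he1.
have hwe : forall k, (fun j => uvec u j * h') k = uvec u k * h' by [].
have hwt : forall k, uvec u k = uvec u k * 1 by move=> k; rewrite mulr1.
have Aeu := Aq_unit hdim hfree efree he0 hwe hPe haa hSue.
have Atu := Aq_unit hdim hfree etfree het0 hwt hPt haat hSut.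
have [tpos _] := led_facts ht Aeu.
have [ttpos [X hX]] := led_facts htt Atu.
set Atq := map_mx (fun z : int => z%:~R : rat) (Amat aat u et) in Atu.
have hXq : (tt%:~R *: invmx Atq) = map_mx (fun z : int => z%:~R : rat) X.
  have h1 : Atq *m map_mx (fun z : int => z%:~R : rat) X = (tt%:~R : rat)%:M.
    by rewrite -map_mxM hX map_scalar_mx.
  by rewrite -(mulKmx Atu (map_mx _ X)) h1 mul_mx_scalar.
have Lat : forall k, L (alphat k * h').
  move=> k; rewrite /alphat /alpha_vec -/Atq hXq mulr_suml; apply: Lsum => i.
  rewrite mxE -scalerAl; apply: LZ; apply: LOK hL'.
  by case: het => he1 _ _; exact: he1.
pose Fe := det_in e (fun j => uvec u j * h').
pose Ft := det_in et (uvec u).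
have [y0 hy0] := exists_notin hdim etfree (uvec u) (ltnSn _).
have hy0' : Ft y0 != 0.
  by apply/eqP => /(det_in_eq0 hdim etfree hfree); apply/negP.
have hphi : forall a1 x y, Fe ((a1 *: x + y) * h') = a1 * Fe (x * h') + Fe (y * h').
  by move=> a1 x y; rewrite mulrDl -scalerAl /Fe (det_inP hdim efree).
have hpsi : forall a1 x y, Ft (a1 *: x + y) = a1 * Ft x + Ft y.
  by move=> a1 x y; rewrite /Ft (det_inP hdim etfree).
have hFw : forall k, Fe (uvec u k * h') = 0.
  by move=> k; exact: (Fw hdim hfree efree he0 hwe k).
have hker : forall y, Ft y = 0 -> Fe (y * h') = 0.
  move=> y /(det_in_eq0 hdim etfree hfree) /coord_span ->.
  rewrite mulr_suml (_ : \sum_i _ = \sum_(i < r.+1) coord [tuple uvec u j | j < r.+1] i y *: (uvec u i * h')).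
    by rewrite /Fe (det_in_sum hdim efree) big1 // => i _; rewrite -/Fe hFw mulr0.
  by apply: eq_bigr => i _; rewrite nth_mktup scalerAl.
have hprop := proportional hphi hpsi hker hy0'.
set C := Fe (y0 * h') / Ft y0 in hprop.
pose x := aa (alphat ord0 * h').
have Fea : forall k, Fe (uvec u k * alpha j) = (\prod_j c j (widen_ord (leqnSn _) j))%:~R * t%:~R * (k == j)%:R.
  by move=> k; exact: (F_alpha hdim hfree efree he0 hwe hPe haa hSue t k j).
have Fta : forall k j', Ft (uvec u k * alphat j') = (\prod_j ct j (widen_ord (leqnSn _) j))%:~R * tt%:~R * (k == j')%:R.
  by move=> k j'; exact: (F_alpha hdim hfree etfree het0 hwt hPt haat hSut tt k j').
have u0 : uvec u ord0 = 1 by rewrite /uvec unlift_none.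
have hx : (\prod_j c j (widen_ord (leqnSn _) j))%:~R * (x%:~R : rat) =
          C * ((\prod_j ct j (widen_ord (leqnSn _) j))%:~R * tt%:~R).
  rewrite (haa _ (Lat ord0)) -/Fe hprop.
  by have := Fta ord0 ord0; rewrite u0 mul1r eqxx mulr1 => ->.
have el : eps%:~R * l = (x%:~R) / t%:~R.
  by rewrite /eps /l mulrA -intrM; congr (_%:~R / _); rewrite [RHS]intEsg abszE.
have ht0 : (t%:~R : rat) != 0 by rewrite intr_eq0 gt_eqF.
pose z := ((x%:~R : rat) / t%:~R) *: alpha j - alphat j * h'.
have hz : forall k, Fe (uvec u k * z) = 0.
  move=> k; rewrite /z mulrBr -scalerAr mulrA.
  rewrite /Fe (det_inD hdim efree) (det_inN hdim efree) (det_inZ hdim efree) -/Fe Fea hprop Fta.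
  rewrite [C * _]mulrA -hx.
  field; exact: ht0.
have hzk := F_ker hdim hfree efree he0 hwe hPe haa hSue hz.
have [cc hcc] : exists cc : 'I_r.+2 -> int, alphat j * h' = \sum_i (cc i)%:~R * e i.
  by case: he => _ hsp _; exact: hsp _ (Lat j).
have hco : coords e ord0 (alphat j * h') = (cc ord0)%:~R.
  rewrite hcc (_ : \sum_i _ = \sum_i ((cc i)%:~R : rat) *: e i) ?(coords_sum efree) //.
  by apply: eq_bigr => i _; rewrite scaler_int mulrzl.
have hca : coords e ord0 (alpha j) = 0.
  rewrite /alpha /alpha_vec coords_lsum big1 // => i _.
  by rewrite (coords_b efree) eq_sym (negbTE (neq_lift _ _)) mulr0.
have cN : forall y, coords e ord0 (- y) = - coords e ord0 y by move=> y; rewrite /coords linearN.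
have hcz : coords e ord0 z = - (cc ord0)%:~R.
  by rewrite /z coordsP hca mulr0 add0r cN hco.
have hzv : z = (- cc ord0)%:~R * h'.
  by rewrite {1}hzk hcz -rmorphN /= scaler_int mulrzl.
exists (- cc ord0); rewrite el -hzv /z.
by rewrite addrC subrK.
Qed.
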